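(* Under the hypotheses of the previous lemma, assume additionally that $\boldsymbol{\Sigma}_k$ is positive semidefinite. Then for all $\boldsymbol{w}=(\boldsymbol{x},\boldsymbol{\lambda})\in\Omega$, $$f(\boldsymbol{x})-f(\tilde{\boldsymbol{x}}^k)+(\boldsymbol{w}-\tilde{\boldsymbol{w}}^k)^T\boldsymbol{\Gamma}(\boldsymbol{w})+\frac1{2\gamma}\Big(\|\boldsymbol{w}-\boldsymbol{w}^k\|_{\boldsymbol{\Sigma}_k}^2-\|\boldsymbol{w}-\boldsymbol{w}^{k+1}\|_{\boldsymbol{\Sigma}_k}^2\Big)\ge 0.$$
   Context: Setting: $\mathcal{X}\subset\mathbb{R}^n$ nonempty closed convex; $f$ convex; $\phi_i$ convex, continuously differentiable; $\Phi=(\phi_1,\dots,\phi_m)^T$, Jacobian $\mathcal{D}\Phi$; $\Omega=\mathcal{X}\times\mathbb{R}^m_+$; $\boldsymbol{\Gamma}(\boldsymbol{w})=(\mathcal{D}\Phi(\boldsymbol{x})^T\boldsymbol{\lambda},-\Phi(\boldsymbol{x}))$. Hypotheses of the previous lemma: $\gamma\in(0,2)$, $r_k,s_k>0$, $\tilde{\boldsymbol{w}}^k\in\Omega$ satisfies $f(\boldsymbol{x})-f(\tilde{\boldsymbol{x}}^k)+(\boldsymbol{w}-\tilde{\boldsymbol{w}}^k)^T\{\boldsymbol{\Gamma}(\tilde{\boldsymbol{w}}^k)+\boldsymbol{\Sigma}_k(\tilde{\boldsymbol{w}}^k-\boldsymbol{w}^k)\}\ge0$ for all $\boldsymbol{w}\in\Omega$,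 $\boldsymbol{w}^{k+1}=\boldsymbol{w}^k-\gamma(\boldsymbol{w}^k-\tilde{\boldsymbol{w}}^k)$, where $\boldsymbol{\Sigma}_k=\begin{pmatrix} r_k\boldsymbol{I}_n & -\mathcal{D}\Phi(\tilde{\boldsymbol{x}}^k)^T\\ -\mathcal{D}\Phi(\tilde{\boldsymbol{x}}^k) & s_k\boldsymbol{I}_m\end{pmatrix}$; $\|\boldsymbol{v}\|_{\boldsymbol{H}}^2=\boldsymbol{v}^T\boldsymbol{H}\boldsymbol{v}$. *)

(* Defs.v *)
From HB Require Import structures.
From mathcomp Require Import all_boot all_order all_algebra.
From mathcomp Require Import all_classical all_reals all_analysis.
Set Implicit Arguments. Unset Strict Implicit. Unset Printing Implicit Defensive.
Import Order.TTheory GRing.Theory Num.Theory.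
Import numFieldNormedType.Exports.
Local Open Scope classical_set_scope.
Local Open Scope ring_scope.

Section Defs.
Variable R : realType.

Definition convex_set_cv {n : nat} (X : set 'cV[R]_n) : Prop :=
  forall x y (t : R), X x -> X y -> 0 <= t -> t <= 1 ->
    X (t *: x + (1 - t) *: y).

Definition convex_fun_cv {n : nat} (f : 'cV[R]_n -> R) : Prop :=
  forall x y (t : R), 0 <= t -> t <= 1 ->
    f (t *: x + (1 - t) *: y) <= t * f x + (1 - t) * f y.

Definition jacPhi {n m : nat} (phi : 'I_m -> 'cV[R]_n -> R)
  (x : 'cV[R]_n) : 'M[R]_(m, n) :=
  \matrix_(i < m, j < n) ('d (phi i) x) (delta_mx j 0 : 'cV[R]_n).

Definition PhiV {n m : nat} (phi : 'I_m -> 'cV[R]_n -> R) (x : 'cV[R]_n)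
  : 'cV[R]_m := \col_(i < m) phi i x.

Definition GammaOp {n m : nat} (phi : 'I_m -> 'cV[R]_n -> R)
  (x : 'cV[R]_n) (lam : 'cV[R]_m) : 'cV[R]_(n + m) :=
  col_mx ((jacPhi phi x)^T *m lam) (- PhiV phi x).

Definition Sigma {n m : nat} (phi : 'I_m -> 'cV[R]_n -> R) (r s : R)
  (xt : 'cV[R]_n) : 'M[R]_(n + m) :=
  block_mx (r%:M) (- (jacPhi phi xt)^T) (- jacPhi phi xt) (s%:M).

Definition mnorm2 {p : nat} (H : 'M[R]_p) (v : 'cV[R]_p) : R :=
  (v^T *m H *m v) 0 0.

Definition psd {p : nat} (H : 'M[R]_p) : Prop :=
  forall v : 'cV[R]_p, 0 <= mnorm2 H v.

Definition dotc {p : nat} (a b : 'cV[R]_p) : R := (a^T *m b) 0 0.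

Definition nonneg {m : nat} (lam : 'cV[R]_m) : Prop := forall i, 0 <= lam i 0.

End Defs.

(* Main.v *)
Require Import Defs.
From HB Require Import structures.
From mathcomp Require Import all_boot all_order all_algebra.
From mathcomp Require Import all_classical all_reals all_analysis.
From mathcomp Require Import lra ring.
Import Order.TTheory GRing.Theory Num.Theory.
Import numFieldNormedType.Exports.
Local Open Scope classical_set_scope.
Local Open Scope ring_scope.

Section Lin.
Variable R : realType.
Variable p : nat.
Implicit Types a b c : 'cV[R]_p.

Lemma dotcE a b : dotc a b = \sum_i a i 0 * b i 0.
Proof. by rewrite /dotc mxE; apply: eq_bigr => i _; rewrite mxE. Qed.
Lemma dotcDl a b c : dotc (a + b) c = dotc a c + dotc b c.
Proof. by rewrite !dotcE -big_split; apply: eq_bigr => i _; rewrite mxE mulrDl. Qed.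
Lemma dotcDr a b c : dotc c (a + b) = dotc c a + dotc c b.
Proof. by rewrite !dotcE -big_split; apply: eq_bigr => i _; rewrite mxE mulrDr. Qed.
Lemma dotcNl a c : dotc (- a) c = - dotc a c.
Proof. by rewrite !dotcE -sumrN; apply: eq_bigr => i _; rewrite mxE mulNr. Qed.
Lemma dotcNr a c : dotc c (- a) = - dotc c a.
Proof. by rewrite !dotcE -sumrN; apply: eq_bigr => i _; rewrite mxE mulrN. Qed.
Lemma dotcBl a b c : dotc (a - b) c = dotc a c - dotc b c.
Proof. by rewrite dotcDl dotcNl. Qed.
Lemma dotcBr a b c : dotc c (a - b) = dotc c a - dotc c b.
Proof. by rewrite dotcDr dotcNr. Qed.
Lemma dotcZl (k : R) a c : dotc (k *: a) c = k * dotc a c.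
Proof. by rewrite !dotcE mulr_sumr; apply: eq_bigr => i _; rewrite mxE mulrA. Qed.
Lemma dotcZr (k : R) a c : dotc c (k *: a) = k * dotc c a.
Proof. by rewrite !dotcE mulr_sumr; apply: eq_bigr => i _; rewrite mxE mulrCA. Qed.
End Lin.

Lemma dotc_col (R : realType) n m (a c : 'cV[R]_n) (b d : 'cV[R]_m) :
  dotc (col_mx a b) (col_mx c d) = dotc a c + dotc b d.
Proof. by rewrite /dotc tr_col_mx mul_row_col mxE. Qed.

Lemma dotc_tr (R : realType) n m (A : 'M[R]_(m, n)) u l :
  dotc u (A^T *m l) = dotc (A *m u) l.
Proof. by rewrite /dotc trmx_mul mulmxA. Qed.

Lemma jac_mul (R : realType) n m (phi : 'I_m -> 'cV[R]_n -> R) y (v : 'cV[R]_n) i :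
  (jacPhi phi y *m v) i 0 = 'd (phi i) y v.
Proof.
rewrite mxE {2}(matrix_sum_delta v) linear_sum; apply: eq_bigr => j _.
by rewrite big_ord1 linearZ /= mxE mulrC; congr (_ * _).
Qed.

Lemma quad (R : realType) p (S : 'M[R]_p) (gamma : R) (w wk wt : 'cV[R]_p) :
  S^T = S -> psd S -> 0 < gamma -> gamma < 2 ->
  dotc (w - wt) (S *m (wt - wk)) <=
  (2 * gamma)^-1 * (mnorm2 S (w - wk) - mnorm2 S (w - (wk - gamma *: (wk - wt)))).
Proof.
move=> sym ps g0 g2.
set e := w - wk; set d := wt - wk.
have -> : w - wt = e - d by rewrite /e /d opprB addrA subrK.
have -> : w - (wk - gamma *: (wk - wt)) = e - gamma *: d.
  by rewrite /e /d -[wt - wk]opprB scalerN opprK opprB addrA addrAC.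
clearbody e d.
have NE v : mnorm2 S v = dotc v (S *m v) by rewrite /mnorm2 /dotc mulmxA.
have SY u v : dotc u (S *m v) = dotc v (S *m u).
  rewrite /dotc [RHS](_ : _ = ((v^T *m (S *m u))^T) 0 0); last by rewrite [in RHS]mxE.
  by rewrite !trmx_mul trmxK sym mulmxA.
have q0 := ps d; rewrite NE in q0.
rewrite !NE !mulmxBr !dotcBl !dotcBr -!scalemxAr !dotcZl !dotcZr (SY d e).
set B := dotc e (S *m d) in q0 *.
set Q := dotc d (S *m d) in q0 *.
set E := dotc e (S *m e).
have gn : 2 * gamma != 0 by rewrite mulf_neq0 // lt0r_neq0.
have -> : (2 * gamma)^-1 * (E - (E - gamma * B - (gamma * B - gamma * (gamma * Q))))
   = B - gamma / 2 * Q.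
  by field; rewrite lt0r_neq0.
clearbody B Q E.
nra.
Qed.
Lemma grad_ineq (R : realType) (n : nat) (g : 'cV[R]_n -> R) (x y : 'cV[R]_n) :
  convex_fun_cv g -> differentiable g x -> g x + 'd g x (y - x) <= g y.
Proof.
move=> cg dg.
rewrite -deriveE //.
have D := @diff_derivable _ _ _ _ _ (y - x) dg.
have H : (fun h : R => h^-1 *: ((g \o shift x) (h *: (y - x)) - g x)) @ 0^'+ --> derive g x (y - x).
  move=> A HA; have := D A HA; rewrite /= !near_simpl /=.
  rewrite !near_withinE; apply: filterS => h P hp; apply: P.
  by rewrite /= lt0r_neq0.
rewrite addrC -lerBrDr.
apply: (cvgr_to_le H).
near=> h.
have hp : 0 < h by near: h; exact: nbhs_right_gt.
rewrite /= -[X in _ <= X]mul1r -[in X in _ <= X](mulVf (lt0r_neq0 hp)).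
rewrite -mulrA ler_pM2l ?invr_gt0 //.
have h0 : 0 <= h by exact: ltW.
have h1 : h <= 1.
  near: h; apply: nbhs_right_le; exact: ltr01.
have := cg y x h h0 h1.
have -> : h *: y + (1 - h) *: x = h *: (y - x) + x.
  by rewrite scalerBl scale1r scalerBr [x - _]addrC addrA.
lra.
Unshelve. all: by end_near.
Qed.

Lemma gradJ (R : realType) n m (phi : 'I_m -> 'cV[R]_n -> R) (x y : 'cV[R]_n) i :
  (forall i, convex_fun_cv (phi i)) -> (forall i x, differentiable (phi i) x) ->
  phi i x + (jacPhi phi x *m (y - x)) i 0 <= phi i y.
Proof.
move=> cv dv.
have := grad_ineq _ _ _ x y (cv i) (dv i x).
by rewrite -jac_mul.
Qed.

Lemma alg4 (R : realType) (A B a b l1 l2 : R) : 0 <= l1 -> 0 <= l2 ->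
  a + - A <= b -> b + B <= a -> 0 <= A * l1 - B * l2 + (l1 - l2) * (b - a).
Proof. move=> h1 h2 g1 g2; nra. Qed.

Lemma mono_pt (R : realType) n m (phi : 'I_m -> 'cV[R]_n -> R) (x xt : 'cV[R]_n) (lam lt : 'cV[R]_m) i :
  (forall i, convex_fun_cv (phi i)) -> (forall i x, differentiable (phi i) x) ->
  nonneg lam -> nonneg lt ->
  0 <= ((jacPhi phi x *m (x - xt)) i 0 * lam i 0
   - (jacPhi phi xt *m (x - xt)) i 0 * lt i 0)
   + (lam - lt) i 0 * (- PhiV phi x - - PhiV phi xt) i 0.
Proof.
move=> cv dv hl hlt.
have g1 := gradJ _ _ _ phi x xt i cv dv.
have g2 := gradJ _ _ _ phi xt x i cv dv.
have N : (jacPhi phi x *m (xt - x)) i 0 = - (jacPhi phi x *m (x - xt)) i 0.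
  by rewrite -[xt - x]opprB mulmxN mxE.
rewrite N in g1.
have E : (lam - lt) i 0 * (- PhiV phi x - - PhiV phi xt) i 0
   = (lam i 0 - lt i 0) * (phi i xt - phi i x).
  by rewrite !mxE opprK [- _ + _]addrC.
rewrite E.
apply: alg4 => //.
Qed.

Lemma mono (R : realType) n m (phi : 'I_m -> 'cV[R]_n -> R) (x xt : 'cV[R]_n) (lam lt : 'cV[R]_m) :
  (forall i, convex_fun_cv (phi i)) -> (forall i x, differentiable (phi i) x) ->
  nonneg lam -> nonneg lt ->
  0 <= dotc (col_mx x lam - col_mx xt lt) (GammaOp phi x lam - GammaOp phi xt lt).
Proof.
move=> cv dv hl hlt.
rewrite /GammaOp !opp_col_mx !add_col_mx dotc_col dotcBr.
rewrite [X in X - _ + _]dotc_tr [X in _ - X + _]dotc_tr.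
rewrite [X in X - _ + _]dotcE [X in _ - X + _]dotcE [X in _ + X]dotcE -sumrB -big_split.
apply: sumr_ge0 => i _.
exact: (mono_pt _ _ _ phi x xt lam lt i cv dv hl hlt).
Qed.

Theorem mainTheorem5 (R : realType) (n m : nat)
  (X : set 'cV[R]_n) (f : 'cV[R]_n -> R) (phi : 'I_m -> 'cV[R]_n -> R)
  (gamma r s : R) (xk xt : 'cV[R]_n) (lk lt : 'cV[R]_m) (w1 : 'cV[R]_(n + m)) :
  X !=set0 -> closed X -> convex_set_cv X ->
  convex_fun_cv f ->
  (forall i, convex_fun_cv (phi i)) ->
  (forall i x, differentiable (phi i) x) ->
  (forall i j, continuous (fun x => jacPhi phi x i j)) ->
  0 < gamma -> gamma < 2 -> 0 < r -> 0 < s ->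
  X xt -> nonneg lt ->
  (forall (x : 'cV[R]_n) (lam : 'cV[R]_m), X x -> nonneg lam ->
     0 <= f x - f xt
          + dotc (col_mx x lam - col_mx xt lt)
                 (GammaOp phi xt lt
                  + Sigma phi r s xt *m (col_mx xt lt - col_mx xk lk))) ->
  w1 = col_mx xk lk - gamma *: (col_mx xk lk - col_mx xt lt) ->
  psd (Sigma phi r s xt) ->
  forall (x : 'cV[R]_n) (lam : 'cV[R]_m), X x -> nonneg lam ->
    0 <= f x - f xt
         + dotc (col_mx x lam - col_mx xt lt) (GammaOp phi x lam)
         + (2 * gamma)^-1 *
             (mnorm2 (Sigma phi r s xt) (col_mx x lam - col_mx xk lk)
              - mnorm2 (Sigma phi r s xt) (col_mx x lam - w1)).
Proof.
move=> _ _ _ _ cv dv _ g0 g2 _ _ _ nlt H ew ps x lam Xx nl.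
have h := H x lam Xx nl.
have hm := mono _ _ _ phi x xt lam lt cv dv nl nlt.
have sym : (Sigma phi r s xt)^T = Sigma phi r s xt.
  rewrite /Sigma tr_block_mx !tr_scalar_mx !linearN /= trmxK.
  done.
have hq := quad _ _ (Sigma phi r s xt) gamma (col_mx x lam) (col_mx xk lk) (col_mx xt lt) sym ps g0 g2.
rewrite ew.
rewrite dotcDr in h; rewrite dotcBr in hm.
lra.
Qed.
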